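(* Let $\Delta$ be a simplicial polytopal fan in $\mathbb{R}^d$ with ray generators $\mathbf{v}_1,\ldots,\mathbf{v}_n$, and let $\{(\mathbf{u}^{(i)},y^{(i)})\}_{i=1}^m\subset\mathbb{R}^d\times\mathbb{R}$ be noiseless data, i.e. there is a polytope $P\in\mathcal{P}(\Delta)$ with $y^{(i)}=h_P(\mathbf{u}^{(i)})$ for all $i$. With $U=(\mathbf{u}^{(1)},\ldots,\mathbf{u}^{(m)})^\mathsf{T}$ and $\mathbf{y}=(y^{(i)})_i$, \[ \hat{P}^\Delta(U,\mathbf{y})=\{\mathbf{h}\in\mathcal{P}(\Delta)\colon A_U\mathbf{h}=\mathbf{y}\}. \]
   Context: A fan is simplicial if every cone is generated by linearly independent vectors; polytopal if it is the normal fan of a polytope. $h_P(\mathbf{u})=\max_{\mathbf{x}\in P}\langle\mathbf{x},\mathbf{u}\rangle$. For $\mathbf{h}\in\mathbb{R}^n$, $P(\mathbf{h})=\{\mathbf{x}\colon\langle\mathbf{x},\mathbf{v}_i\rangle\le h_i\ \forall i\}$. The deformation cone $\mathcal{P}(\Delta)$ is the set of polytopes whose normal fan is coarsened by $\Delta$, identified via support vectors $\mathbf{h}=(h_P(\mathbf{v}_i))_i$ with a closed polyhedral cone in $\mathbb{R}^n$. For $\mathbf{u}\in\mathbb{R}^d$, with $\sigma$ the cone of $\Delta$ containing $\mathbf{u}$ in its relative interior and $\mathbf{u}=\sum_{k\in I_\sigma}\lambda_k\mathbf{v}_k$ over the generators of $\sigma$, set $[\mathbf{u}]_i=\lambda_i$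 for $i\in I_\sigma$ and $0$ otherwise. $A_U$ is the $m\times n$ matrix with rows $[\mathbf{u}^{(i)}]^\mathsf{T}$. The least-squares estimator $\hat{P}^\Delta(U,\mathbf{y})$ is the set of support vectors of polytopes $P\in\mathcal{P}(\Delta)$ minimizing $\frac1m\sum_i(h_P(\mathbf{u}^{(i)})-y^{(i)})^2$. *)

(* Defs.v *)
From HB Require Import structures.
From mathcomp Require Import all_boot all_order all_algebra.
From mathcomp Require Import boolp classical_sets reals.
From Stdlib Require Import ClassicalEpsilon.

Set Implicit Arguments.
Unset Strict Implicit.
Unset Printing Implicit Defensive.

Import Order.TTheory GRing.Theory Num.Theory.
Local Open Scope ring_scope.
Local Open Scope classical_set_scope.

Section Defs.
Variable R : realType.

Definition dotp d (x u : 'rV[R]_d) : R := \sum_(j < d) x 0 j * u 0 j.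

Definition conv d k (V : 'I_k.+1 -> 'rV[R]_d) : set 'rV[R]_d :=
  [set x | exists mu : 'I_k.+1 -> R,
     (forall j, 0 <= mu j) /\ \sum_j mu j = 1 /\ x = \sum_j mu j *: V j].

Definition polytope d (P : set 'rV[R]_d) : Prop :=
  exists k (V : 'I_k.+1 -> 'rV[R]_d), P = conv V.

Definition hP d (P : set 'rV[R]_d) (u : 'rV[R]_d) : R :=
  sup [set dotp x u | x in P].

Definition argmaxP d (P : set 'rV[R]_d) (u : 'rV[R]_d) : set 'rV[R]_d :=
  [set x | P x /\ forall z, P z -> dotp z u <= dotp x u].

Definition face d (P : set 'rV[R]_d) (F : set 'rV[R]_d) : Prop :=
  exists u, F = argmaxP P u.

Definition normal_cone d (P F : set 'rV[R]_d) : set 'rV[R]_d :=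
  [set u | F `<=` argmaxP P u].

Definition normal_fan d (P : set 'rV[R]_d) : set (set 'rV[R]_d) :=
  [set N | exists F, face P F /\ N = normal_cone P F].

Definition gcone d n (v : 'I_n -> 'rV[R]_d) (S : {set 'I_n}) : set 'rV[R]_d :=
  [set x | exists lam : 'I_n -> R,
     (forall k, k \in S -> 0 <= lam k) /\ x = \sum_(k in S) lam k *: v k].

Definition fan_cones d n (Delta : {set {set 'I_n}}) (v : 'I_n -> 'rV[R]_d)
  : set (set 'rV[R]_d) :=
  [set C | exists2 S, S \in Delta & C = gcone v S].

(* Delta (given by index sets of its cones) is a simplicial fan in R^d with
   ray generators v_1..v_n. *)
Definition simplicial_fan d n (Delta : {set {set 'I_n}}) (v : 'I_n -> 'rV[R]_d)
  : Prop :=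
  (forall S, S \in Delta -> forall lam : 'I_n -> R,
      \sum_(k in S) lam k *: v k = 0 -> forall k, k \in S -> lam k = 0) /\
  (* closed under faces (faces of a simplicial cone = subsets of generators) *)
  (forall S T : {set 'I_n}, S \in Delta -> T \subset S -> T \in Delta) /\
  (forall S T : {set 'I_n}, S \in Delta -> T \in Delta ->
      gcone v S `&` gcone v T = gcone v (S :&: T)) /\
  (forall k : 'I_n, [set k]%SET \in Delta).

Definition polytopal d n (Delta : {set {set 'I_n}}) (v : 'I_n -> 'rV[R]_d)
  : Prop :=
  exists P, polytope P /\ normal_fan P = fan_cones Delta v.

Definition coarsened_by d n (Delta : {set {set 'I_n}}) (v : 'I_n -> 'rV[R]_d)
  (P : set 'rV[R]_d) : Prop :=
  forall S, S \in Delta -> exists2 N, normal_fan P N & gcone v S `<=` N.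

Definition in_defP d n (Delta : {set {set 'I_n}}) (v : 'I_n -> 'rV[R]_d)
  (P : set 'rV[R]_d) : Prop :=
  polytope P /\ coarsened_by Delta v P.

Definition supvec d n (v : 'I_n -> 'rV[R]_d) (P : set 'rV[R]_d) : 'cV[R]_n :=
  \col_k hP P (v k).

(* Deformation cone, as a subset of R^n via support vectors. *)
Definition def_cone d n (Delta : {set {set 'I_n}}) (v : 'I_n -> 'rV[R]_d)
  : set 'cV[R]_n :=
  [set h | exists P, in_defP Delta v P /\ h = supvec v P].

(* lam are the coordinates [u] of u: u = sum_{k in I_sigma} lam_k v_k with
   sigma in Delta, u in relint sigma (all lam_k > 0 on I_sigma), 0 elsewhere. *)
Definition is_fan_coord d n (Delta : {set {set 'I_n}}) (v : 'I_n -> 'rV[R]_d)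
  (u : 'rV[R]_d) (lam : 'I_n -> R) : Prop :=
  exists2 S, S \in Delta &
    (forall k, k \in S -> 0 < lam k) /\ (forall k, k \notin S -> lam k = 0) /\
    u = \sum_(k in S) lam k *: v k.

Definition fan_coord d n (Delta : {set {set 'I_n}}) (v : 'I_n -> 'rV[R]_d)
  (u : 'rV[R]_d) : 'I_n -> R :=
  epsilon (inhabits (fun _ => 0)) (is_fan_coord Delta v u).

Definition A_U d n m (Delta : {set {set 'I_n}}) (v : 'I_n -> 'rV[R]_d)
  (U : 'M[R]_(m, d)) : 'M[R]_(m, n) :=
  \matrix_(i, k) fan_coord Delta v (row i U) k.

Definition lsq_loss d m (U : 'M[R]_(m, d)) (y : 'cV[R]_m) (P : set 'rV[R]_d)
  : R :=
  m%:R^-1 * \sum_(i < m) (hP P (row i U) - y i 0) ^+ 2.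

Definition lse d n m (Delta : {set {set 'I_n}}) (v : 'I_n -> 'rV[R]_d)
  (U : 'M[R]_(m, d)) (y : 'cV[R]_m) : set 'cV[R]_n :=
  [set h | exists P, in_defP Delta v P /\ h = supvec v P /\
     forall Q, in_defP Delta v Q -> lsq_loss U y P <= lsq_loss U y Q].

End Defs.

(* Main.v *)
Require Import Defs.
From HB Require Import structures.
From mathcomp Require Import all_boot all_order all_algebra.
From mathcomp Require Import boolp classical_sets reals.
From Stdlib Require Import ClassicalEpsilon.

Import Order.TTheory GRing.Theory Num.Theory.
Local Open Scope ring_scope.
Local Open Scope classical_set_scope.

Section Aux.
Set Implicit Arguments.
Variable R : realType.

Lemma dotp_sum d (I : finType) (P : pred I) (c : I -> R) (X : I -> 'rV[R]_d) u :
  dotp (\sum_(j | P j) c j *: X j) u = \sum_(j | P j) c j * dotp (X j) u.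
Proof.
rewrite /dotp.
under eq_bigr => t _ do rewrite summxE big_distrl /=.
rewrite exchange_big /=; apply: eq_bigr => j _.
rewrite big_distrr /=; apply: eq_bigr => t _.
by rewrite mxE mulrA.
Qed.

Lemma dotp_sumr d (I : finType) (P : pred I) (c : I -> R) (X : I -> 'rV[R]_d) x :
  dotp x (\sum_(j | P j) c j *: X j) = \sum_(j | P j) c j * dotp x (X j).
Proof.
rewrite /dotp.
under eq_bigr => t _ do rewrite summxE big_distrr /=.
rewrite exchange_big /=; apply: eq_bigr => j _.
rewrite big_distrr /=; apply: eq_bigr => t _.
by rewrite mxE mulrCA.
Qed.

Lemma hP_eq d (P : set 'rV[R]_d) u x : P x ->
  (forall z, P z -> dotp z u <= dotp x u) -> hP P u = dotp x u.
Proof.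
move=> Px H; rewrite /hP; apply/eqP; rewrite eq_le; apply/andP; split.
- apply: ge_sup; first by exists (dotp x u), x.
  by move=> r [z Pz <-]; exact: H.
- apply: sup_upper_bound; last by exists x.
  split; first by exists (dotp x u), x.
  by exists (dotp x u) => r [z Pz <-]; exact: H.
Qed.

Lemma argmax_nonempty d (P : set 'rV[R]_d) w : polytope P ->
  exists x, argmaxP P w x.
Proof.
move=> [k [V ->]].
pose j0 := [arg max_(j > ord0) dotp (V j) w]%O.
have Hj : forall j, dotp (V j) w <= dotp (V j0) w.
  by rewrite /j0; case: arg_maxP => // i _ Hi j; exact: Hi.
exists (V j0); split.
- exists (fun j => (j == j0)%:R); split; first by move=> j; rewrite ler0n.
  split; first by rewrite (bigD1 j0) //= eqxx big1 ?addr0 // => j /negPf ->.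
  rewrite (bigD1 j0) //= eqxx scale1r big1 ?addr0 // => j /negPf ->.
  by rewrite scale0r.
- move=> z [mu [mu0 [mu1 ->]]].
  rewrite dotp_sum.
  apply: le_trans (_ : \sum_j mu j * dotp (V j0) w <= _).
    by apply: ler_sum => j _; apply: ler_wpM2l.
  by rewrite -big_distrl /= mu1 mul1r.
Qed.

Lemma hP_lin d n (Delta : {set {set 'I_n}}) (v : 'I_n -> 'rV[R]_d) P u lam :
  in_defP Delta v P -> is_fan_coord Delta v u lam ->
  hP P u = \sum_k lam k * hP P (v k).
Proof.
move=> [polP cob] [S SD [lpos [l0 ->]]].
have [N [F [[w ->] ->]] sub] := cob S SD.
have [x xF] := argmax_nonempty w polP.
have hv : forall k, k \in S -> argmaxP P (v k) x.
  move=> k kS; apply: (sub (v k)) => //.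
  exists (fun j => (j == k)%:R); split => [j _|]; first by rewrite ler0n.
  rewrite (bigD1 k) //= eqxx scale1r big1 ?addr0 // => j /andP[_ /negPf ->].
  by rewrite scale0r.
have hu : argmaxP P (\sum_(k in S) lam k *: v k) x.
  apply: sub => //; exists lam; split => // k kS; exact: ltW (lpos k kS).
rewrite (@hP_eq _ _ _ _ hu.1 hu.2) dotp_sumr.
rewrite [RHS](bigID (mem S)) /= [X in _ + X]big1 ?addr0.
  by apply: eq_bigr => k kS; rewrite (@hP_eq _ _ _ _ (hv k kS).1 (hv k kS).2).
by move=> k kS; rewrite l0 // mul0r.
Qed.

Lemma fan_coord_ex d n (Delta : {set {set 'I_n}}) (v : 'I_n -> 'rV[R]_d) u :
  simplicial_fan Delta v -> polytopal Delta v ->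
  is_fan_coord Delta v u (fan_coord Delta v u).
Proof.
move=> [_ [sub _]] [P0 [_ nf]].
rewrite /fan_coord; apply: epsilon_spec.
have : fan_cones Delta v (normal_cone P0 (argmaxP P0 u)).
  by rewrite -nf; exists (argmaxP P0 u); split => //; exists u.
case=> S SD eqC.
have : gcone v S u by rewrite -eqC => z.
case=> lam [lpos ->].
pose S' := [set k in S | 0 < lam k].
exists (fun k => if k \in S' then lam k else 0), S'.
  have HS : S' \subset S by apply/fintype.subsetP => k; rewrite inE => /andP[].
  exact: (sub S S' SD HS).
split.
  by move=> k kS'; rewrite kS'; move: kS'; rewrite inE => /andP[].
split; first by move=> k /negPf ->.
rewrite (bigID (fun k => 0 < lam k)) /= [X in _ + X]big1 ?addr0.
  by apply: eq_big => [k|k H]; rewrite inE // H.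
move=> k /andP[kS]; rewrite -leNgt => le.
have -> : lam k = 0 by apply/eqP; rewrite eq_le le lpos.
by rewrite scale0r.
Qed.
End Aux.

Theorem corollary3p2 (R : realType) (d n m : nat)
  (Delta : {set {set 'I_n}}) (v : 'I_n -> 'rV[R]_d)
  (U : 'M[R]_(m, d)) (y : 'cV[R]_m) :
  simplicial_fan Delta v -> polytopal Delta v ->
  (exists P, in_defP Delta v P /\ forall i, y i 0 = hP P (row i U)) ->
  lse Delta v U y = [set h | def_cone Delta v h /\ A_U Delta v U *m h = y].
Proof.
move=> sf pf [Ps [Psdef Psy]].
have key : forall Q, in_defP Delta v Q -> forall i,
    (A_U Delta v U *m supvec v Q) i 0 = hP Q (row i U).
  move=> Q HQ i; rewrite mxE (hP_lin HQ (fan_coord_ex (row i U) sf pf)).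
  by apply: eq_bigr => k _; rewrite !mxE.
have loss_ge0 : forall Q, 0 <= lsq_loss U y Q.
  by move=> Q; apply: mulr_ge0; [rewrite invr_ge0 ler0n|apply: sumr_ge0 => i _; apply: sqr_ge0].
have lossPs : lsq_loss U y Ps = 0.
  by rewrite /lsq_loss big1 ?mulr0 // => i _; rewrite Psy subrr expr0n.
have l2A : forall Q, in_defP Delta v Q -> lsq_loss U y Q = 0 ->
    A_U Delta v U *m supvec v Q = y.
  move=> Q0 HQ L0; apply/matrixP => i j; rewrite (ord1 j) key //.
  have m0 : m%:R^-1 != 0 :> R.
    by rewrite invr_eq0 pnatr_eq0 -lt0n (leq_ltn_trans (leq0n i) (ltn_ord i)).
  move: L0; rewrite /lsq_loss => /eqP; rewrite mulf_eq0 (negPf m0) /= => /eqP.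
  move=> /psumr_eq0P H; have := H (fun k _ => sqr_ge0 _) i isT.
  by move=> /eqP; rewrite sqrf_eq0 subr_eq0 => /eqP.
have A2l : forall Q, in_defP Delta v Q -> A_U Delta v U *m supvec v Q = y ->
    lsq_loss U y Q = 0.
  move=> Q HQ HA; rewrite /lsq_loss big1 ?mulr0 // => i _.
  by rewrite -HA key // subrr expr0n.
apply/seteqP; split.
- move=> h [Q [HQ [-> Hmin]]]; split; first by exists Q.
  apply: l2A => //; apply/eqP; rewrite eq_le loss_ge0 andbT -lossPs.
  exact: Hmin.
- move=> h [[Q [HQ ->]] HA]; exists Q; split => //; split => // Q' HQ'.
  by rewrite A2l.
Qed.
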